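(* If $C$ and $D$ are finite connected racks such that $b(C)=b(D)$ in the Burnside ring $\mathrm{B}(\mathcal{R})$ of finite racks, then $C\cong D$ as racks.
   Context: A rack is a set $R$ with a binary operation $\rhd$ such that every left multiplication $\ell_a\colon b\mapsto a\rhd b$ is a bijection and $a\rhd(b\rhd c)=(a\rhd b)\rhd(a\rhd c)$ for all $a,b,c$. The inner automorphism group $\mathrm{Inn}(R)$ is the subgroup of the symmetric group on $R$ generated by all $\ell_a$. A rack is connected if it is non-empty and $\mathrm{Inn}(R)$ acts transitively on $R$. A subrack of $R$ is a subset $S$ with $\ell_s(S)=S$ for all $s\in S$. A decomposition of $R$ into $S$ and $T$ means that $S,T$ are disjoint subracks (possibly empty) with $S\cup T=R$. The Burnside ring of finite racks $\mathrm{B}(\mathcal{R})$ is the abelian group generated by symbols $b(R)$, one for each finite rack $R$, subject to the relations $b(R_1)=b(R_2)$ whenever $R_1\cong R_2$, and $b(R)=b(S)+b(T)$ whenever $R$ decomposes into subracks $S$ and $T$. *)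

(* Defs.v *)
From mathcomp Require Import all_boot all_fingroup all_algebra.
Set Implicit Arguments.
Unset Strict Implicit.
Unset Printing Implicit Defensive.

Definition rack_axioms (T : finType) (op : T -> T -> T) : Prop :=
  (forall a, bijective (op a)) /\
  (forall a b c, op a (op b c) = op (op a b) (op a c)).

Record frack := FRack {
  rcar :> finType;
  rop : rcar -> rcar -> rcar;
  rackP : rack_axioms rop }.

Definition lmul (R : frack) (a : rcar R) : {perm rcar R} :=
  perm (bij_inj (proj1 (rackP R) a)).

Definition Inn (R : frack) : {set {perm rcar R}} :=
  <<[set lmul a | a : rcar R]>>%g.

Definition connected_rack (R : frack) : bool :=
  (0 < #|rcar R|) && [transitive Inn R, on [set: rcar R] | 'P].

Definition rack_iso (C D : frack) : Prop :=
  exists f : rcar C -> rcar D,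
    bijective f /\ forall a b, f (rop a b) = rop (f a) (f b).

Definition is_subrack (R : frack) (S : {set rcar R}) : bool :=
  [forall s in S, [set rop s x | x in S] == S].

Section Subrack.
Variables (R : frack) (S : {set rcar R}) (HS : is_subrack S).

Lemma subrack_closed s x : s \in S -> x \in S -> rop s x \in S.
Proof.
move=> sS xS; have /forall_inP/(_ s sS)/eqP <- := HS.
by apply/imsetP; exists x.
Qed.

Definition sub_op (x y : {x : rcar R | x \in S}) : {x : rcar R | x \in S} :=
  exist _ (rop (sval x) (sval y)) (subrack_closed (svalP x) (svalP y)).

Lemma sub_rack_axioms : rack_axioms sub_op.
Proof.
split.
- move=> a; apply: injF_bij => x y /(congr1 sval) /=.
  by move/(bij_inj (proj1 (rackP R) (sval a)))/val_inj.
- move=> a b c; apply: val_inj => /=; exact: (proj2 (rackP R)).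
Qed.

Definition subrack : frack := FRack sub_rack_axioms.
End Subrack.

(* An additive invariant of finite racks with values in an abelian group A:
   a map respecting the defining relations of the Burnside ring B(R). *)
Definition burnside_additive (A : zmodType) (f : frack -> A) : Prop :=
  (forall R1 R2, rack_iso R1 R2 -> f R1 = f R2) /\
  (forall (R : frack) (S T : {set rcar R})
          (HS : is_subrack S) (HT : is_subrack T),
     [disjoint S & T] -> S :|: T = [set: rcar R] ->
     f R = (f (subrack HS) + f (subrack HT))%R).

(* b(C) = b(D) in B(R): since B(R) is the abelian group presented by the
   generators b(R) and the above relations, equality of two generators holds
   iff every relation-respecting map into an abelian group identifies them. *)
Definition burnside_eq (C D : frack) : Prop :=
  forall (A : zmodType) (f : frack -> A), burnside_additive f -> f C = f D.

(* Main.v *)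
Require Import Defs.
From mathcomp Require Import all_boot all_fingroup all_algebra.
Set Implicit Arguments.
Unset Strict Implicit.
Unset Printing Implicit Defensive.

Definition homb (C R : frack) (h : {ffun rcar C -> rcar R}) : bool :=
  [forall a, [forall b, h (rop a b) == rop (h a) (h b)]] && injectiveb h.

Definition Hset (C R : frack) := [set h : {ffun rcar C -> rcar R} | homb h].

Lemma hombP (C R : frack) (h : {ffun rcar C -> rcar R}) :
  reflect ((forall a b, h (rop a b) = rop (h a) (h b)) /\ injective h) (homb h).
Proof.
apply: (iffP andP) => [[/forallP H /injectiveP]|[H /injectiveP]] //.
  by split=> // a b; have /forallP/(_ b)/eqP := H a.
by split=> //; apply/forallP => a; apply/forallP => b; rewrite H.
Qed.

Lemma rack_iso_sym (R1 R2 : frack) : rack_iso R1 R2 -> rack_iso R2 R1.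
Proof.
move=> [g [[g' gK g'K] Hg]]; exists g'; split; first by exists g.
move=> a b; rewrite -{1}(g'K a) -{1}(g'K b) -Hg; exact: gK.
Qed.

Lemma iso_le (C R1 R2 : frack) : rack_iso R1 R2 ->
  #|Hset C R1| <= #|Hset C R2|.
Proof.
move=> [g [gb Hg]].
have gi := bij_inj gb.
pose phi (h : {ffun rcar C -> rcar R1}) : {ffun rcar C -> rcar R2} :=
  [ffun x => g (h x)].
have phi_inj : injective phi.
  move=> h1 h2 /ffunP E; apply/ffunP => x; apply: gi.
  by have := E x; rewrite !ffunE.
rewrite -(card_imset _ phi_inj); apply: subset_leq_card.
apply/subsetP => h2 /imsetP[h]; rewrite !inE => /hombP[Hh hi] ->.
apply/hombP; split.
  by move=> a b; rewrite !ffunE Hh Hg.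
by move=> x y; rewrite !ffunE => /gi /hi.
Qed.

Lemma iso_eq (C R1 R2 : frack) : rack_iso R1 R2 ->
  #|Hset C R1| = #|Hset C R2|.
Proof.
move=> I; apply/eqP; rewrite eqn_leq iso_le //=.
exact/iso_le/rack_iso_sym.
Qed.

Lemma sub_card (C R : frack) (S : {set rcar R}) (HS : is_subrack S) :
  #|Hset C (subrack HS)| = #|[set h in Hset C R | [forall x, h x \in S]]|.
Proof.
pose phi (h : {ffun rcar C -> rcar (subrack HS)}) : {ffun rcar C -> rcar R} :=
  [ffun x => sval (h x)].
have phi_inj : injective phi.
  move=> h1 h2 /ffunP E; apply/ffunP => x; apply: val_inj.
  by have := E x; rewrite !ffunE.
rewrite -(card_imset _ phi_inj); apply: eq_card => h.
apply/imsetP/idP.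
  move=> [h' ]; rewrite !inE => /hombP[Hh hi] ->.
  apply/andP; split; last by apply/forallP => x; rewrite ffunE (svalP (h' x)).
  apply/hombP; split.
    by move=> a b; rewrite !ffunE Hh.
  by move=> x y; rewrite !ffunE => /val_inj /hi.
rewrite !inE => /andP[/hombP[Hh hi] /forallP Hs].
exists [ffun x => (exist _ (h x) (Hs x) : rcar (subrack HS))].
  rewrite inE; apply/hombP; split.
    by move=> a b; rewrite !ffunE; apply: val_inj; rewrite /= Hh.
  by move=> x y; rewrite !ffunE => /(congr1 sval) /hi.
by apply/ffunP => x; rewrite !ffunE.
Qed.
Lemma conn_closed (C : frack) (Y : {set rcar C}) :
  connected_rack C -> (forall a y, y \in Y -> rop a y \in Y) ->
  forall y z, y \in Y -> z \in Y.
Proof.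
move=> /andP[_ tr] cl y z yY.
have sub : Inn C \subset 'N(Y | 'P)%g.
  rewrite /Inn gen_subG; apply/subsetP => g /imsetP[a _ ->].
  rewrite /astabs !inE; apply/subsetP => x xY.
  by rewrite inE /= apermE /lmul permE; apply: cl.
have [g gI ->] := atransP2 tr (in_setT y) (in_setT z).
have gN := subsetP sub g gI.
by rewrite (astabs_act _ gN).
Qed.

Lemma closure_all (R : frack) (S T : {set rcar R})
  (HS : is_subrack S) (HT : is_subrack T) :
  [disjoint S & T] -> S :|: T = [set: rcar R] ->
  forall s y, y \in S -> rop s y \in S.
Proof.
move=> dis cov s y yS.
have : s \in S :|: T by rewrite cov inE.
case/setUP => sX; first exact: subrack_closed.
apply/negPn/negP => nS.
have : rop s y \in S :|: T by rewrite cov inE.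
rewrite inE (negbTE nS) /=.
have /forall_inP/(_ s sX)/eqP <- := HT.
case/imsetP => z zT /(bij_inj (proj1 (rackP R) s)) eyz.
by rewrite -eyz (disjointFr dis yS) in zT.
Qed.

Lemma split_card (C R : frack) (S T : {set rcar R})
  (HS : is_subrack S) (HT : is_subrack T) :
  connected_rack C -> [disjoint S & T] -> S :|: T = [set: rcar R] ->
  #|Hset C R| = #|[set h in Hset C R | [forall x, h x \in S]]|
              + #|[set h in Hset C R | [forall x, h x \in T]]|.
Proof.
move=> cC dis cov.
have [c0 _] : exists c0 : rcar C, c0 \in [set: rcar C].
  by apply/card_gt0P; rewrite cardsT; case/andP: cC.
have dis' : [disjoint T & S] by rewrite disjoint_sym.
have cov' : T :|: S = [set: rcar R] by rewrite setUC.
have allX : forall (X Y : {set rcar R}) (HX : is_subrack X) (HY : is_subrack Y),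
    [disjoint X & Y] -> X :|: Y = [set: rcar R] ->
    forall h, h \in Hset C R -> h c0 \in X -> forall x, h x \in X.
  move=> X Y HX HY d c h; rewrite inE => /hombP[Hh _] h0 x.
  have := @conn_closed C [set x | h x \in X] cC.
  move=> /(_ _ c0 x); rewrite !inE; apply=> // a y; rewrite !inE Hh.
  exact: (closure_all HX HY d c).
rewrite -(cardsID [set h : {ffun rcar C -> rcar R} | h c0 \in S] (Hset C R)).
congr (_ + _); apply: eq_card => h; rewrite !inE.
  case hH: (homb h) => //=.
  have hH' : h \in Hset C R by rewrite inE.
  apply/idP/forallP; first exact: (allX _ _ HS HT).
  by apply.
case hH: (homb h); rewrite ?andbF ?andbT //=.
have hH' : h \in Hset C R by rewrite inE.
apply/idP/forallP.
  move=> h0; apply: (allX _ _ HT HS dis' cov' _ hH').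
  have : h c0 \in S :|: T by rewrite cov inE.
  by rewrite inE (negbTE h0).
move=> /(_ c0) hT; apply/negP => hS.
by rewrite (disjointFr dis hS) in hT.
Qed.

Lemma additive_card (C : frack) : connected_rack C ->
  burnside_additive (fun R : frack => (#|Hset C R| : int)).
Proof.
move=> cC; split.
  by move=> R1 R2 I; rewrite (iso_eq C I).
move=> R S T HS HT dis cov.
by rewrite (split_card HS HT cC dis cov) -!sub_card PoszD.
Qed.

Lemma embed (C D : frack) : connected_rack C -> burnside_eq C D ->
  exists h : {ffun rcar C -> rcar D}, homb h.
Proof.
move=> cC E.
have := E _ _ (additive_card cC) => /= [[eq]].
have : 0 < #|Hset C C|.
  apply/card_gt0P; exists [ffun x => x]; rewrite inE; apply/hombP.
  by split; [move=> a b; rewrite !ffunE | move=> x y; rewrite !ffunE].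
rewrite eq => /card_gt0P[h]; rewrite inE => hh; by exists h.
Qed.

Lemma burnside_eq_sym (C D : frack) : burnside_eq C D -> burnside_eq D C.
Proof. by move=> E A f fa; rewrite (E A f fa). Qed.

Theorem theorem4p2 (C D : frack) :
  connected_rack C -> connected_rack D -> burnside_eq C D -> rack_iso C D.
Proof.
move=> cC cD E.
have [h /hombP[Hh hi]] := embed cC E.
have [h' /hombP[_ hi']] := embed cD (burnside_eq_sym E).
have le : #|rcar D| <= #|rcar C| by rewrite -(card_image hi') max_card.
exists h; split => //; exact: inj_card_bij hi le.
Qed.
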